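(* Let $S$ be a set of $n\ge 3$ points in the plane in general position (no four points of $S$ cocircular, no three collinear), and for $k=1,\dots,n-1$ let $v_k$ be the number of vertices of the $k$-th order Voronoi diagram of $S$. Then for every $k\in\{1,\dots,n-1\}$, $$v_k+v_{n-k} = 4k(n-k)-2n.$$
   Context: For points $x,y$ in the plane let $h(x,y)=\{p\in\mathbb{R}^2 : d(x,p)\le d(y,p)\}$. For $A\subseteq S$ let $V(A)=\bigcap_{x\in A,\,y\in S\setminus A} h(x,y)$. The $k$-th order Voronoi diagram $V_k(S)$ is the subdivision of the plane into the nonempty regions $V(A)$ with $|A|=k$; $v_k$ is the number of vertices of this planar subdivision. *)

(* Defs.v *)
From HB Require Import structures.
From mathcomp Require Import all_boot all_order all_algebra.
From mathcomp Require Import reals.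
Set Implicit Arguments. Unset Strict Implicit. Unset Printing Implicit Defensive.
Import Order.TTheory GRing.Theory Num.Theory.
Local Open Scope ring_scope.

Section Voronoi.
Variable R : realType.
Notation pt := (R * R)%type.

Definition dist (x p : pt) : R :=
  Num.sqrt ((x.1 - p.1) ^+ 2 + (x.2 - p.2) ^+ 2).

Definition halfplane (x y : pt) (p : pt) : Prop := dist x p <= dist y p.

(* The point set S is given as an injective indexing P : 'I_n -> R * R,
   subsets A of S as A : {set 'I_n}.
   V(A) = intersection over x in A, y in S \ A of h(x,y). *)
Definition region (n : nat) (P : 'I_n -> pt) (A : {set 'I_n}) (p : pt) : Prop :=
  forall i j, i \in A -> j \notin A -> halfplane (P i) (P j) p.

Definition voronoi_vertex (n : nat) (P : 'I_n -> pt) (k : nat) (p : pt) : Prop :=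
  exists A1 A2 A3 : {set 'I_n},
    [/\ #|A1| = k, #|A2| = k & #|A3| = k] /\
    [/\ A1 != A2, A1 != A3 & A2 != A3] /\
    [/\ region P A1 p, region P A2 p & region P A3 p].

Definition num_vertices (n : nat) (P : 'I_n -> pt) (k v : nat) : Prop :=
  exists s : seq pt, [/\ uniq s, size s = v &
    forall p, p \in s <-> voronoi_vertex P k p].

Definition collinear (a b c : pt) : Prop :=
  exists (u v w : R), (u != 0 \/ v != 0) /\
    [/\ u * a.1 + v * a.2 = w, u * b.1 + v * b.2 = w & u * c.1 + v * c.2 = w].

Definition cocircular (a b c d : pt) : Prop :=
  exists (o : pt) (r : R), [/\ dist a o = r, dist b o = r, dist c o = r & dist d o = r].

Definition general_position (n : nat) (P : 'I_n -> pt) : Prop :=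
  (forall i j l : 'I_n, uniq [:: i; j; l] -> ~ collinear (P i) (P j) (P l)) /\
  (forall i j l m : 'I_n, uniq [:: i; j; l; m] ->
     ~ cocircular (P i) (P j) (P l) (P m)).

End Voronoi.

(* Main.v *)
Require Import Defs.
From HB Require Import structures.
From mathcomp Require Import all_boot all_order all_algebra.
From mathcomp Require Import reals.
From mathcomp Require Import ring lra zify.
Set Implicit Arguments. Unset Strict Implicit. Unset Printing Implicit Defensive.
Import Order.TTheory GRing.Theory Num.Theory.
Local Open Scope ring_scope.

Section LL.
Variable R : realType.
Notation pt := (R * R)%type.

Definition orient (p q r : pt) : R :=
  (q.1 - p.1) * (r.2 - p.2) - (q.2 - p.2) * (r.1 - p.1).

Lemma ex_min_seq (T : eqType) (s : seq T) (f : T -> R) (x0 : T) :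
  x0 \in s -> exists x, x \in s /\ forall y, y \in s -> f x <= f y.
Proof.
elim: s x0 => [//|a s IH] x0 _.
case: s IH => [|b s] IH.
  by exists a; split; rewrite ?mem_head // => y; rewrite inE => /eqP ->.
have [x [xs xm]] := IH b (mem_head _ _).
have [le|lt] := leP (f a) (f x).
  exists a; split; first exact: mem_head.
  move=> y; rewrite inE => /orP [/eqP ->//|ys].
  exact: le_trans le (xm _ ys).
exists x; split; first by rewrite inE xs orbT.
move=> y; rewrite inE => /orP [/eqP ->|ys]; last exact: xm.
exact: ltW.
Qed.

Lemma ex_min_set (T : finType) (A : {set T}) (f : T -> R) (x0 : T) :
  x0 \in A -> exists x, x \in A /\ forall y, y \in A -> f x <= f y.
Proof.
move=> h; have /(ex_min_seq f) [x [xs xm]] : x0 \in enum A by rewrite mem_enum.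
by exists x; split; [rewrite -mem_enum | move=> y yA; apply: xm; rewrite mem_enum].
Qed.

Variables (I : finType) (J : {set I}) (w : I -> pt).

Definition scr (b c : I) : R :=
  ((w c).1 * (w b).2 - (w b).1 * (w c).2) / ((w b).2 - (w c).2).

Lemma scr_diff b c b' c' :
  0 < (w b).2 -> (w c).2 < 0 -> 0 < (w b').2 -> (w c').2 < 0 ->
  scr b' c' - scr b c =
  ((- (w c').2) * orient (w b) (w c) (w b') + (w b').2 * orient (w b) (w c) (w c'))
  / (((w b).2 - (w c).2) * ((w b').2 - (w c').2)).
Proof.
move=> h1 h2 h3 h4.
have n1 : (w b).2 - (w c).2 != 0 by rewrite subr_eq0; apply/eqP => e; lra.
have n2 : (w b').2 - (w c').2 != 0 by rewrite subr_eq0; apply/eqP => e; lra.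
rewrite /scr /orient; field; by rewrite n1 n2.
Qed.


Lemma orient_aab p q : orient p q p = 0. Proof. by rewrite /orient; ring. Qed.
Lemma orient_abb p q : orient p q q = 0. Proof. by rewrite /orient; ring. Qed.

Definition allpos (b c : I) : bool :=
  [forall d, ((d \in J) && (d != b) && (d != c)) ==> (0 < orient (w b) (w c) (w d))].

Lemma scr_lt b c b' c' :
  0 < (w b).2 -> (w c).2 < 0 -> 0 < (w b').2 -> (w c').2 < 0 ->
  0 < ((- (w c').2) * orient (w b) (w c) (w b') + (w b').2 * orient (w b) (w c) (w c')) ->
  scr b c < scr b' c'.
Proof.
move=> h1 h2 h3 h4 hn; rewrite -subr_gt0 scr_diff //.
by apply: divr_gt0 => //; apply: mulr_gt0; lra.
Qed.

Hypothesis Hy : forall i, i \in J -> (w i).2 != 0.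
Hypothesis Hnc : forall i j l, i \in J -> j \in J -> l \in J -> i != j -> i != l -> j != l ->
  orient (w i) (w j) (w l) != 0.

Definition CP : {set I * I} :=
  [set bc | [&& bc.1 \in J, bc.2 \in J, 0 < (w bc.1).2 & (w bc.2).2 < 0]].

Lemma allpos_strict b c b' c' : (b, c) \in CP -> (b', c') \in CP -> allpos b c ->
  (b', c') != (b, c) -> scr b c < scr b' c'.
Proof.
rewrite !inE /= => /and4P [bJ cJ hb hc] /and4P [bJ' cJ' hb' hc'] /forallP ap ne.
have Fb : 0 <= orient (w b) (w c) (w b') /\ (b' != b -> 0 < orient (w b) (w c) (w b')).
  have [->|nb] := eqVneq b' b; first by rewrite orient_aab.
  have nc : b' != c by apply/eqP => e; move: hb'; rewrite e; lra.
  have := ap b'; rewrite bJ' nb nc /= => h; split=> //; exact: ltW.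
have Fc : 0 <= orient (w b) (w c) (w c') /\ (c' != c -> 0 < orient (w b) (w c) (w c')).
  have [->|nc] := eqVneq c' c; first by rewrite orient_abb.
  have nb : c' != b by apply/eqP => e; move: hc'; rewrite e; lra.
  have := ap c'; rewrite cJ' nb nc /= => h; split=> //; exact: ltW.
apply: scr_lt => //.
case: Fb Fc => [Fb1 Fb2] [Fc1 Fc2].
have [eb|nb] := eqVneq b' b.
  have nc : c' != c by apply: contraNneq ne => ->; rewrite eb.
  have := Fc2 nc; nra.
have := Fb2 nb; nra.
Qed.

Lemma min_allpos b c : (b, c) \in CP ->
  (forall y, y \in CP -> scr b c <= scr y.1 y.2) -> allpos b c.
Proof.
move=> bcP hm; have := bcP; rewrite inE /= => /and4P [bJ cJ hb hc].
apply/forallP => d; apply/implyP => /andP [/andP [dJ db] dc].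
have F0 := Hnc bJ cJ dJ (_ : b != c) (_ : b != d) (_ : c != d).
have bc : b != c by apply/eqP => e; move: hb; rewrite e; lra.
have := F0 bc; rewrite eq_sym db eq_sym dc => /(_ isT isT) F1.
rewrite lt_neqAle eq_sym F1 /=; rewrite leNgt; apply/negP => Fn.
have := Hy dJ; rewrite neq_lt => /orP [dneg|dpos].
  have dP : (b, d) \in CP by rewrite inE /= bJ dJ hb dneg.
  have := hm _ dP => /=; apply/negP; rewrite -ltNge.
  rewrite -subr_lt0 scr_diff // orient_aab.
  rewrite pmulr_llt0; first nra.
  by rewrite invr_gt0; apply: mulr_gt0; lra.
have dP : (d, c) \in CP by rewrite inE /= dJ cJ dpos hc.
have := hm _ dP => /=; apply/negP; rewrite -ltNge.
rewrite -subr_lt0 scr_diff // orient_abb.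
rewrite pmulr_llt0; first nra.
by rewrite invr_gt0; apply: mulr_gt0; lra.
Qed.


Lemma allpos_min b0 c0 : (b0, c0) \in CP -> exists m, m \in CP /\
  forall b c, (b, c) \in CP -> allpos b c = ((b, c) == m).
Proof.
move=> h0.
have [m [mP mm]] := ex_min_set (fun bc => scr bc.1 bc.2) h0.
exists m; split=> // b c bcP.
have apm : allpos m.1 m.2 by apply: min_allpos; rewrite -?surjective_pairing.
apply/idP/eqP => [ap|e]; last by rewrite -e in apm.
apply/eqP; apply: contraT => ne.
have := allpos_strict bcP (_ : (m.1, m.2) \in CP) ap.
rewrite -surjective_pairing eq_sym => /(_ mP ne) lt.
have := mm _ bcP; rewrite /=; lra.
Qed.

Lemma sum_allpos b0 c0 : (b0, c0) \in CP ->
  \sum_(b in J | 0 < (w b).2) \sum_(c in J | (w c).2 < 0) (allpos b c : nat) = 1%N.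
Proof.
move=> /allpos_min [m [mP hm]].
have := mP; rewrite inE => /and4P [m1J m2J m1p m2n].
rewrite (bigD1 m.1) /=; last by rewrite m1J m1p.
rewrite (bigD1 m.2) /=; last by rewrite m2J m2n.
rewrite hm ?inE /= ?m1J ?m2J ?m1p ?m2n // -surjective_pairing eqxx.
rewrite big1 => [|c /andP [/andP [cJ cn] ne]]; last first.
  rewrite hm ?inE /= ?m1J ?cJ ?m1p ?cn //.
  by case: eqP => // e; case/eqP: ne; rewrite -e.
rewrite big1 // => b /andP [/andP [bJ bp] ne].
rewrite big1 // => c /andP [cJ cn].
rewrite hm ?inE /= ?bJ ?cJ ?bp ?cn //.
by case: eqP => // e; case/eqP: ne; rewrite -e.
Qed.

End LL.

Definition allneg (R : realType) (I : finType) (J : {set I}) (w : I -> (R * R)%type) (b c : I) : bool :=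
  [forall d, ((d \in J) && (d != b) && (d != c)) ==> (orient (w b) (w c) (w d) < 0)].

Lemma local_count (R : realType) (I : finType) (J : {set I}) (w : I -> (R * R)%type)
  (Hy : forall i, i \in J -> (w i).2 != 0)
  (Hnc : forall i j l, i \in J -> j \in J -> l \in J -> i != j -> i != l -> j != l ->
     orient (w i) (w j) (w l) != 0)
  (b0 c0 : I) : b0 \in J -> c0 \in J -> 0 < (w b0).2 -> (w c0).2 < 0 ->
  \sum_(b in J | 0 < (w b).2) \sum_(c in J | (w c).2 < 0)
     ((allpos J w b c : nat) + (allneg J w b c : nat))%N = 2%N.
Proof.
move=> b0J c0J hb hc.
have h0 : (b0, c0) \in CP J w by rewrite inE /= b0J c0J hb hc.
under eq_bigr => b _ do rewrite big_split.
rewrite big_split /= (sum_allpos Hy Hnc h0).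
pose w' i := (- (w i).1, (w i).2).
have ow p q r : orient (- p.1, p.2) (- q.1, q.2) (- r.1, r.2) = - orient p q r.
  by rewrite /orient /=; ring.
have Hy' : forall i, i \in J -> (w' i).2 != 0 by [].
have Hnc' : forall i j l, i \in J -> j \in J -> l \in J -> i != j -> i != l -> j != l ->
     orient (w' i) (w' j) (w' l) != 0.
  by move=> i j l *; rewrite /w' ow oppr_eq0; apply: Hnc.
have h0' : (b0, c0) \in CP J w' by rewrite inE /= b0J c0J hb hc.
have E b c : allneg J w b c = allpos J w' b c.
  apply: eq_forallb => d; congr (_ ==> _).
  by rewrite /w' ow oppr_gt0.
under eq_bigr => b _ do under eq_bigr => c _ do rewrite E.
by have := sum_allpos Hy' Hnc' h0'; rewrite /w' /= => ->.
Qed.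

Section G.
Variable R : realType.
Notation pt := (R * R)%type.
Implicit Types a b c d p q : pt.

Definition sq p q : R := (p.1 - q.1) ^+ 2 + (p.2 - q.2) ^+ 2.

Definition center a b c : pt :=
  let u1 := b.1 - a.1 in let u2 := b.2 - a.2 in
  let v1 := c.1 - a.1 in let v2 := c.2 - a.2 in
  let D := 2 * (u1 * v2 - u2 * v1) in
  (a.1 + (v2 * (u1 ^+ 2 + u2 ^+ 2) - u2 * (v1 ^+ 2 + v2 ^+ 2)) / D,
   a.2 + (u1 * (v1 ^+ 2 + v2 ^+ 2) - v1 * (u1 ^+ 2 + u2 ^+ 2)) / D).

Definition inv a p : pt := ((p.1 - a.1) / sq p a, (p.2 - a.2) / sq p a).

Lemma sq_ge0 p q : 0 <= sq p q.
Proof. by rewrite /sq addr_ge0 // sqr_ge0. Qed.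

Lemma sq_eq0 p q : (sq p q == 0) = (p == q).
Proof.
apply/idP/idP => [h|/eqP ->]; last by rewrite /sq !subrr expr0n /= addr0.
move: h; rewrite /sq paddr_eq0 ?sqr_ge0 // !sqrf_eq0 !subr_eq0 => /andP [/eqP h1 /eqP h2].
by apply/eqP; rewrite [p]surjective_pairing [q]surjective_pairing h1 h2.
Qed.

Lemma sq_gt0 p q : p != q -> 0 < sq p q.
Proof. by move=> h; rewrite lt_neqAle sq_ge0 andbT eq_sym sq_eq0. Qed.

Lemma center_eqb a b c : orient a b c != 0 -> sq b (center a b c) = sq a (center a b c).
Proof.
move=> h; rewrite /orient in h; rewrite /sq /center /=.
field; apply/eqP => e; move/eqP: h; apply; rewrite -e; ring.
Qed.

Lemma center_eqc a b c : orient a b c != 0 -> sq c (center a b c) = sq a (center a b c).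
Proof.
move=> h; rewrite /orient in h; rewrite /sq /center /=.
field; apply/eqP => e; move/eqP: h; apply; rewrite -e; ring.
Qed.

Lemma key a b c d : orient a b c != 0 -> b != a -> c != a -> d != a ->
  (sq d (center a b c) - sq a (center a b c)) * orient a b c =
  orient (inv a b) (inv a c) (inv a d) * sq b a * sq c a * sq d a.
Proof.
move=> h hb hc hd.
have := sq_gt0 hb; have := sq_gt0 hc; have := sq_gt0 hd.
rewrite /orient in h *; rewrite /center /inv /= /sq => h1 h2 h3.
move: h h1 h2 h3.
set x1 := b.1 - a.1; set y1 := b.2 - a.2; set x2 := c.1 - a.1; set y2 := c.2 - a.2.
set x3 := d.1 - a.1; set y3 := d.2 - a.2.
have -> : d.1 - (a.1 + (y2 * (x1 ^+ 2 + y1 ^+ 2) - y1 * (x2 ^+ 2 + y2 ^+ 2)) / (2 * (x1 * y2 - y1 * x2))) = x3 - (y2 * (x1 ^+ 2 + y1 ^+ 2) - y1 * (x2 ^+ 2 + y2 ^+ 2)) / (2 * (x1 * y2 - y1 * x2)) by rewrite /x3; ring.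
have -> : d.2 - (a.2 + (x1 * (x2 ^+ 2 + y2 ^+ 2) - x2 * (x1 ^+ 2 + y1 ^+ 2)) / (2 * (x1 * y2 - y1 * x2))) = y3 - (x1 * (x2 ^+ 2 + y2 ^+ 2) - x2 * (x1 ^+ 2 + y1 ^+ 2)) / (2 * (x1 * y2 - y1 * x2)) by rewrite /y3; ring.
have -> : forall z w : R, z - (z + w) = - w by move=> z w; ring.
have -> : forall z w : R, z - (z + w) = - w by move=> z w; ring.
clearbody x1 y1 x2 y2 x3 y3 => h h1 h2 h3.
field.
rewrite h /= ?gt_eqF //.
Qed.

Lemma center_uniq a b c p : orient a b c != 0 ->
  sq b p = sq a p -> sq c p = sq a p -> p = center a b c.
Proof.
move=> h hb hc.
have ob := center_eqb h; have oc := center_eqc h.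
move: ob oc; set o := center a b c => ob oc.
have e1 : (b.1 - a.1) * (p.1 - o.1) + (b.2 - a.2) * (p.2 - o.2) = 0.
  have : (sq b p - sq a p) - (sq b o - sq a o) =
     -2 * ((b.1 - a.1) * (p.1 - o.1) + (b.2 - a.2) * (p.2 - o.2)) by rewrite /sq; ring.
  rewrite hb ob !subrr => /esym /eqP; rewrite mulf_eq0 => /orP [|/eqP //].
  by rewrite oppr_eq0 pnatr_eq0.
have e2 : (c.1 - a.1) * (p.1 - o.1) + (c.2 - a.2) * (p.2 - o.2) = 0.
  have : (sq c p - sq a p) - (sq c o - sq a o) =
     -2 * ((c.1 - a.1) * (p.1 - o.1) + (c.2 - a.2) * (p.2 - o.2)) by rewrite /sq; ring.
  rewrite hc oc !subrr => /esym /eqP; rewrite mulf_eq0 => /orP [|/eqP //].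
  by rewrite oppr_eq0 pnatr_eq0.
have d1 : (p.1 - o.1) * orient a b c = 0.
  rewrite /orient.
  have -> : (p.1 - o.1) * ((b.1 - a.1) * (c.2 - a.2) - (b.2 - a.2) * (c.1 - a.1)) =
    (c.2 - a.2) * ((b.1 - a.1) * (p.1 - o.1) + (b.2 - a.2) * (p.2 - o.2))
    - (b.2 - a.2) * ((c.1 - a.1) * (p.1 - o.1) + (c.2 - a.2) * (p.2 - o.2)) by ring.
  by rewrite e1 e2 !mulr0 subrr.
have d2 : (p.2 - o.2) * orient a b c = 0.
  rewrite /orient.
  have -> : (p.2 - o.2) * ((b.1 - a.1) * (c.2 - a.2) - (b.2 - a.2) * (c.1 - a.1)) =
    (b.1 - a.1) * ((c.1 - a.1) * (p.1 - o.1) + (c.2 - a.2) * (p.2 - o.2))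
    - (c.1 - a.1) * ((b.1 - a.1) * (p.1 - o.1) + (b.2 - a.2) * (p.2 - o.2)) by ring.
  by rewrite e1 e2 !mulr0 subrr.
move/eqP: d1; rewrite mulf_eq0 (negbTE h) orbF subr_eq0 => /eqP d1.
move/eqP: d2; rewrite mulf_eq0 (negbTE h) orbF subr_eq0 => /eqP d2.
by rewrite [p]surjective_pairing [o]surjective_pairing d1 d2.
Qed.

End G.

Section E0.
Variable R : realType.
Notation pt := (R * R)%type.
Variables (I : finType) (P : I -> pt) (s0 : R).
Hypothesis HPinj : injective P.
Hypothesis Hcol : forall i j l, i != j -> i != l -> j != l -> orient (P i) (P j) (P l) != 0.
Hypothesis Hcoc : forall i j l m, i != j -> i != l -> j != l -> m != i -> m != j -> m != l ->
  sq (P m) (center (P i) (P j) (P l)) != sq (P i) (center (P i) (P j) (P l)).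
Definition phi i := (P i).2 + s0 * (P i).1.
Hypothesis Hphi : injective phi.

Notation T3 := (I * (I * I))%type.
Definition ctr (x : T3) := center (P x.1) (P x.2.1) (P x.2.2).
Definition rad (x : T3) := sq (P x.1) (ctr x).
Definition srt (x : T3) := (phi x.2.2 < phi x.1) && (phi x.1 < phi x.2.1).
Definition tset (x : T3) : {set I} := [set x.1; x.2.1; x.2.2].

Definition emptyQ (Q : {set I}) (x : T3) : bool :=
  [forall d, ((d \in Q) && (d \notin tset x)) ==> (rad x < sq (P d) (ctr x))].
Definition fullQ (Q : {set I}) (x : T3) : bool :=
  [forall d, ((d \in Q) && (d \notin tset x)) ==> (sq (P d) (ctr x) < rad x)].

Definition shear (p : pt) : pt := (p.1, p.2 + s0 * p.1).
Lemma orient_shear p q r : orient (shear p) (shear q) (shear r) = orient p q r.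
Proof. by rewrite /orient /shear /=; ring. Qed.

Lemma Pneq i j : i != j -> P i != P j.
Proof. by apply: contra => /eqP /HPinj ->. Qed.

Section At.
Variable a : I.
Definition wa i := shear (inv (P a) (P i)).

Lemma wa2 i : (wa i).2 = (phi i - phi a) / sq (P i) (P a).
Proof. by rewrite /wa /shear /inv /phi /=; ring. Qed.

Lemma wa2_pos i : i != a -> (0 < (wa i).2) = (phi a < phi i).
Proof.
move=> h; rewrite wa2 pmulr_lgt0 ?subr_gt0 //.
by rewrite invr_gt0 sq_gt0 // Pneq.
Qed.

Lemma wa2_neg i : i != a -> ((wa i).2 < 0) = (phi i < phi a).
Proof.
move=> h; rewrite wa2 pmulr_llt0 ?subr_lt0 //.
by rewrite invr_gt0 sq_gt0 // Pneq.
Qed.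

Lemma wa_rel b c d : b != a -> c != a -> d != a -> b != c ->
  (sq (P d) (ctr (a, (b, c))) - rad (a, (b, c))) * orient (P a) (P b) (P c) =
  orient (wa b) (wa c) (wa d) * (sq (P b) (P a) * sq (P c) (P a) * sq (P d) (P a)).
Proof.
move=> hb hc hd hbc; rewrite /wa !orient_shear /rad /ctr /=.
rewrite key ?Pneq //; first by rewrite !mulrA.
by apply: Hcol; rewrite // eq_sym.
Qed.


Lemma sign_rel b c d : b != a -> c != a -> d != a -> b != c -> d != b -> d != c ->
  ((rad (a, (b, c)) < sq (P d) (ctr (a, (b, c)))) =
     (0 < orient (wa b) (wa c) (wa d) * orient (P a) (P b) (P c))) /\
  ((sq (P d) (ctr (a, (b, c))) < rad (a, (b, c))) =
     (orient (wa b) (wa c) (wa d) * orient (P a) (P b) (P c) < 0)).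
Proof.
move=> hb hc hd hbc hdb hdc.
have rel := wa_rel hb hc hd hbc.
set D := sq (P d) (ctr (a, (b, c))) - rad (a, (b, c)) in rel.
set sg := orient (P a) (P b) (P c) in rel *.
set K := orient (wa b) (wa c) (wa d) in rel *.
set pos := sq (P b) (P a) * sq (P c) (P a) * sq (P d) (P a) in rel.
have sg0 : sg != 0 by apply: Hcol; rewrite // eq_sym.
have pos0 : 0 < pos by rewrite !mulr_gt0 // sq_gt0 // Pneq.
have sg2 : 0 < sg ^+ 2 by rewrite exprn_even_gt0.
have e : D * sg ^+ 2 = (K * sg) * pos by rewrite expr2 mulrA rel; ring.
split.
  by rewrite -subr_gt0 -/D -(pmulr_lgt0 D sg2) e pmulr_lgt0.
by rewrite -subr_lt0 -/D -(pmulr_llt0 D sg2) e pmulr_llt0.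
Qed.

End At.

Lemma inner_sum a (Q : {set I}) b0 c0 : a \in Q -> b0 \in Q -> c0 \in Q ->
  phi a < phi b0 -> phi c0 < phi a ->
  \sum_(b in Q | phi a < phi b) \sum_(c in Q | phi c < phi a)
     ((emptyQ Q (a, (b, c)) : nat) + (fullQ Q (a, (b, c)) : nat))%N = 2%N.
Proof.
move=> aQ b0Q c0Q hb0 hc0.
have phin i j : i != j -> phi i != phi j by apply: contra => /eqP /Hphi ->.
have nab i : phi a < phi i -> i != a by move=> h; apply/eqP => e; move: h; rewrite e ltxx.
have nac i : phi i < phi a -> i != a by move=> h; apply/eqP => e; move: h; rewrite e ltxx.
pose J := Q :\ a.
have Hy : forall i, i \in J -> (wa a i).2 != 0.
  move=> i; rewrite !inE => /andP [ia _]; rewrite wa2; apply: mulf_neq0.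
    by rewrite subr_eq0; apply: phin.
  by rewrite invr_neq0 // sq_eq0 Pneq.
have Hnc : forall i j l, i \in J -> j \in J -> l \in J -> i != j -> i != l -> j != l ->
     orient (wa a i) (wa a j) (wa a l) != 0.
  move=> i j l; rewrite !in_setD1 => /andP [ia _] /andP [ja _] /andP [la _] ij il jl.
  have := wa_rel ia ja la ij.
  have h1 : sq (P l) (ctr (a, (i, j))) - rad (a, (i, j)) != 0.
    by rewrite subr_eq0; apply: Hcoc; rewrite // eq_sym.
  have h2 : orient (P a) (P i) (P j) != 0 by apply: Hcol; rewrite // eq_sym.
  move=> e; apply/eqP => e0; move: e; rewrite e0 mul0r => /eqP.
  by rewrite mulf_eq0 (negbTE h1) (negbTE h2).
have b0J : b0 \in J by rewrite in_setD1 b0Q (nab _ hb0).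
have c0J : c0 \in J by rewrite in_setD1 c0Q (nac _ hc0).
have := local_count Hy Hnc b0J c0J (_ : 0 < (wa a b0).2) (_ : (wa a c0).2 < 0).
rewrite wa2_pos ?nab // wa2_neg ?nac // => /(_ hb0 hc0) <-.
apply: eq_big => [b|b /andP [bQ hb]].
  rewrite in_setD1; case: (eqVneq b a) => [->|ba]; first by rewrite ltxx andbF.
  by rewrite wa2_pos // andbC.
apply: eq_big => [c|c /andP [cQ hc]].
  rewrite in_setD1; case: (eqVneq c a) => [->|ca]; first by rewrite ltxx andbF.
  by rewrite wa2_neg // andbC.
have ba := nab _ hb; have ca := nac _ hc.
have bc : b != c by apply/eqP => e; move: hb hc; rewrite e; lra.
have sg0 : orient (P a) (P b) (P c) != 0 by apply: Hcol; rewrite // eq_sym.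
have pre d : ((d \in Q) && (d \notin tset (a, (b, c)))) =
    (d \in J) && (d != b) && (d != c).
  rewrite /tset !inE /=.
  by case: (d \in Q); case: (d == a); case: (d == b); case: (d == c).
have [sgp|sgn] := ltP 0 (orient (P a) (P b) (P c)).
  congr (nat_of_bool _ + nat_of_bool _)%N.
    apply: eq_forallb => d; rewrite pre.
    case: (boolP ((d \in J) && (d != b) && (d != c))) => //= /andP [/andP [dJ db] dc].
    have da : d != a by move: dJ; rewrite in_setD1 => /andP [].
    by have [-> _] := sign_rel ba ca da bc db dc; rewrite pmulr_lgt0.
  apply: eq_forallb => d; rewrite pre.
  case: (boolP ((d \in J) && (d != b) && (d != c))) => //= /andP [/andP [dJ db] dc].
  have da : d != a by move: dJ; rewrite in_setD1 => /andP [].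
  by have [_ ->] := sign_rel ba ca da bc db dc; rewrite pmulr_llt0.
have sgn' : orient (P a) (P b) (P c) < 0 by rewrite lt_neqAle sg0 sgn.
rewrite addnC; congr (nat_of_bool _ + nat_of_bool _)%N.
  apply: eq_forallb => d; rewrite pre.
  case: (boolP ((d \in J) && (d != b) && (d != c))) => //= /andP [/andP [dJ db] dc].
  have da : d != a by move: dJ; rewrite in_setD1 => /andP [].
  by have [_ ->] := sign_rel ba ca da bc db dc; rewrite nmulr_llt0.
apply: eq_forallb => d; rewrite pre.
case: (boolP ((d \in J) && (d != b) && (d != c))) => //= /andP [/andP [dJ db] dc].
have da : d != a by move: dJ; rewrite in_setD1 => /andP [].
by have [-> _] := sign_rel ba ca da bc db dc; rewrite nmulr_lgt0.
Qed.
End E0.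

Section E0b.
Variable R : realType.
Variables (I : finType) (P : I -> (R * R)%type) (s0 : R).
Hypothesis HPinj : injective P.
Hypothesis Hcol : forall i j l, i != j -> i != l -> j != l -> orient (P i) (P j) (P l) != 0.
Hypothesis Hcoc : forall i j l m, i != j -> i != l -> j != l -> m != i -> m != j -> m != l ->
  sq (P m) (center (P i) (P j) (P l)) != sq (P i) (center (P i) (P j) (P l)).
Hypothesis Hphi : injective (phi P s0).

Definition inQ (Q : {set I}) (x : I * (I * I)) := [&& x.1 \in Q, x.2.1 \in Q & x.2.2 \in Q].

Lemma e0_lemma (Q : {set I}) : (2 <= #|Q|)%N ->
  \sum_(x | srt P s0 x && inQ Q x) addn (emptyQ P Q x) (fullQ P Q x) = (2 * #|Q| - 4)%N.
Proof.
move=> hQ.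
pose ph := phi P s0.
have -> : \sum_(x | srt P s0 x && inQ Q x) addn (emptyQ P Q x) (fullQ P Q x) =
  \sum_(a in Q) \sum_(b in Q | ph a < ph b) \sum_(c in Q | ph c < ph a)
     addn (emptyQ P Q (a, (b, c))) (fullQ P Q (a, (b, c))).
  under [RHS]eq_bigr => a _ do rewrite pair_big_dep.
  rewrite pair_big_dep /=.
  apply: eq_big => [[a [b c]]|[a [b c]] _] //=.
  rewrite /srt /inQ /=.
  by case: (a \in Q); case: (b \in Q); case: (c \in Q); case: (ph c < ph a); case: (ph a < ph b).
have /set0Pn [a0 a0Q] : Q != set0 by rewrite -card_gt0; apply: leq_trans hQ.
have [amin [aminQ hmin]] := ex_min_set ph a0Q.
have [amax [amaxQ hmax']] := ex_min_set (fun i => - ph i) a0Q.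
have hmax : forall y, y \in Q -> ph y <= ph amax.
  by move=> y /hmax'; rewrite lerN2.
have phin i j : i != j -> ph i != ph j by apply: contra => /eqP /Hphi ->.
have ltmin y : y \in Q -> y != amin -> ph amin < ph y.
  by move=> yQ ne; rewrite lt_neqAle hmin // andbT phin // eq_sym.
have ltmax y : y \in Q -> y != amax -> ph y < ph amax.
  by move=> yQ ne; rewrite lt_neqAle hmax // andbT phin.
have /set0Pn [y yQ] : Q :\ amin != set0.
  by rewrite -card_gt0; move: hQ; rewrite (cardsD1 amin) aminQ.
move: yQ; rewrite in_setD1 => /andP [yn yQ].
have mm : amax != amin.
  apply/eqP => e; have := ltmin y yQ yn; have := hmax y yQ; rewrite e => h1 h2.
  by move: (le_lt_trans h1 h2); rewrite ltxx.
rewrite (big_setD1 amin) //= big1 => [|b /andP [bQ hb]]; last first.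
  by rewrite big1 // => c /andP [cQ hc]; have := hmin c cQ; rewrite leNgt hc.
rewrite (big_setD1 amax) /=; last by rewrite in_setD1 mm.
rewrite big1 => [|b /andP [bQ hb]]; last by have := hmax b bQ; rewrite leNgt hb.
rewrite !Monoid.simpm.
rewrite (eq_bigr (fun _ => 2%N)) => [|a]; last first.
  rewrite !in_setD1 => /and3P [a1 a2 aQ].
  apply: (inner_sum HPinj Hcol Hcoc Hphi aQ amaxQ aminQ); [exact: ltmax | exact: ltmin].
rewrite sum_nat_const.
move: hQ; rewrite (cardsD1 amin Q) aminQ (cardsD1 amax (Q :\ amin)) in_setD1 mm amaxQ /=.
lia.
Qed.
End E0b.

Local Close Scope ring_scope.

Lemma hockey m K : \sum_(j < K) 'C(j.+1, m.+1) = 'C(K.+1, m.+2).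
Proof.
elim: K => [|K IH]; first by rewrite big_ord0 bin_small.
by rewrite big_ord_recr /= IH [in RHS]binS.
Qed.

Lemma sum_bin_succ m K : \sum_(j < K) 'C(j, m) * j.+1 = m.+1 * 'C(K.+1, m.+2).
Proof.
rewrite -hockey big_distrr /=; apply: eq_bigr => j _.
by rewrite mulnC -mul_bin_diag.
Qed.

Lemma binsum N m :
  \sum_(j < N.+1) 'C(j, m) * (j.+1 * (N.+1 - j)) = m.+1 * 'C(N.+3, m.+3).
Proof.
elim: N => [|N IH].
  rewrite big_ord1 /= muln1.
  by case: m => [|m]; rewrite /= ?muln0 // bin_small // muln0.
have -> : \sum_(j < N.+2) 'C(j, m) * (j.+1 * (N.+2 - j)) =
   \sum_(j < N.+2) 'C(j, m) * (j.+1 * (N.+1 - j)) + \sum_(j < N.+2) 'C(j, m) * j.+1.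
  rewrite -big_split /=; apply: eq_bigr => j _.
  have hj := ltn_ord j; rewrite -mulnDr; congr (_ * _); nia.
rewrite (big_ord_recr N.+1) /= subnn !muln0 addn0 IH sum_bin_succ.
by rewrite -mulnDr [in RHS]binS addnC.
Qed.

Lemma split_mom N j (z : nat -> nat) : j <= N ->
  \sum_(i < N.+1) 'C(i, j) * z i = z j + \sum_(i < N.+1 | j < i) 'C(i, j) * z i.
Proof.
move=> hj.
have hj' : j < N.+1 by [].
rewrite (bigD1 (Ordinal hj')) //= binn mul1n; congr (_ + _).
rewrite big_mkcond [RHS]big_mkcond; apply: eq_bigr => i _.
case: (ltngtP j i) => [lt|gt|eq].
- by rewrite /= (_ : (i != Ordinal hj') = true) //; apply/eqP => /(congr1 val) /= e; move: lt; rewrite e ltnn.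
- by rewrite bin_small // mul0n; case: ifP.
- by rewrite (_ : (i == Ordinal hj') = true) //; apply/eqP; apply: val_inj.
Qed.

Lemma mom_inv N (x y : nat -> nat) :
  (forall m, \sum_(j < N.+1) 'C(j, m) * x j = \sum_(j < N.+1) 'C(j, m) * y j) ->
  forall j, j <= N -> x j = y j.
Proof.
move=> H.
suff S : forall d j, j <= N -> N - j = d -> x j = y j by move=> j hj; exact: S _ j hj erefl.
elim/ltn_ind => d IH j hj hd.
have := H j; rewrite !(split_mom _ hj).
rewrite (eq_bigr (fun i : 'I_N.+1 => 'C(i, j) * y i)) => [/addIn //|i hi].
have hi' : i <= N by have := ltn_ord i.
by rewrite (IH (N - i) _ i hi' erefl) //; rewrite -hd; lia.
Qed.

Local Open Scope ring_scope.

Lemma card_shift (I : finType) (T S : {set I}) (m : nat) : [disjoint T & S] ->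
  #|[set B : {set I} | B \subset S & #|B| == m]| =
  #|[set Q : {set I} | [&& T \subset Q, Q :\: T \subset S & #|Q| == (m + #|T|)%N]]|.
Proof.
move=> dis.
have inj : {in [set B : {set I} | B \subset S & #|B| == m] &, injective (fun B => B :|: T)}.
  move=> B1 B2; rewrite !inE => /andP [s1 _] /andP [s2 _] e.
  have d1 : [disjoint B1 & T] by rewrite disjoint_sym; apply: disjointWr dis.
  have d2 : [disjoint B2 & T] by rewrite disjoint_sym; apply: disjointWr dis.
  have k1 : (B1 :|: T) :\: T = B1 by rewrite setDUl setDv setU0 (setDidPl d1).
  have k2 : (B2 :|: T) :\: T = B2 by rewrite setDUl setDv setU0 (setDidPl d2).
  by rewrite -k1 e k2.
rewrite -(card_in_imset inj); apply: eq_card => Q; rewrite [in RHS]inE.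
apply/imsetP/idP => [[B] |].
  rewrite inE => /andP [sB /eqP cB] ->.
  have dBT : [disjoint B & T] by rewrite disjoint_sym; apply: disjointWr dis.
  rewrite subsetUr setDUl setDv setU0 (setDidPl dBT) sB /=.
  by rewrite cardsU (disjoint_setI0 dBT) cards0 subn0 cB.
move=> /and3P [sTQ sQS /eqP cQ].
exists (Q :\: T); last first.
  apply/setP => z; rewrite !inE.
  case: (boolP (z \in T)) => zT /=; last by rewrite orbF.
  by rewrite (subsetP sTQ).
rewrite inE sQS /= cardsD (setIidPr sTQ) cQ; apply/eqP; lia.
Qed.

Section M.
Variable R : realType.
Variables (I : finType) (P : I -> (R * R)%type) (s0 : R).
Hypothesis HPinj : injective P.
Hypothesis Hcol : forall i j l, i != j -> i != l -> j != l -> orient (P i) (P j) (P l) != 0.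
Hypothesis Hcoc : forall i j l m, i != j -> i != l -> j != l -> m != i -> m != j -> m != l ->
  sq (P m) (center (P i) (P j) (P l)) != sq (P i) (center (P i) (P j) (P l)).
Hypothesis Hphi : injective (phi P s0).

Notation T3 := (I * (I * I))%type.
Definition In (x : T3) : {set I} := [set d | sq (P d) (ctr P x) < rad P x].
Definition Out (x : T3) : {set I} := [set d | rad P x < sq (P d) (ctr P x)].

Section X.
Variable x : T3.
Hypothesis hx : srt P s0 x.

Lemma srt_neq : [/\ x.1 != x.2.1, x.1 != x.2.2 & x.2.1 != x.2.2].
Proof.
move: hx; rewrite /srt => /andP [h1 h2].
have ne i j : phi P s0 i < phi P s0 j -> i != j.
  by move=> h; apply/eqP => e; move: h; rewrite e ltxx.
split; first exact: ne h2.
  by rewrite eq_sym; exact: ne h1.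
by rewrite eq_sym; apply: ne (lt_trans h1 h2).
Qed.

Lemma tset_sq d : d \in tset x -> sq (P d) (ctr P x) = rad P x.
Proof.
have [n1 n2 n3] := srt_neq.
have o : orient (P x.1) (P x.2.1) (P x.2.2) != 0 by apply: Hcol.
rewrite /tset !inE => /orP [/orP [] |] /eqP ->; rewrite /rad /ctr //.
  exact: center_eqb.
exact: center_eqc.
Qed.

Lemma ntset_sq d : d \notin tset x -> sq (P d) (ctr P x) != rad P x.
Proof.
have [n1 n2 n3] := srt_neq.
rewrite /tset !inE !negb_or => /andP [/andP [d1 d2] d3].
by apply: Hcoc.
Qed.

Lemma card_tset : #|tset x| = 3%N.
Proof.
have [n1 n2 n3] := srt_neq.
rewrite /tset setUC cardsU1 cards2 !inE negb_or n1.
by rewrite eq_sym n2 eq_sym n3.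
Qed.

Lemma dis_In : [disjoint tset x & In x].
Proof.
rewrite -setI_eq0; apply/eqP/setP => d; rewrite in_setI in_set0.
case: (boolP (d \in tset x)) => h //=.
by rewrite inE (tset_sq h) ltxx.
Qed.

Lemma dis_Out : [disjoint tset x & Out x].
Proof.
rewrite -setI_eq0; apply/eqP/setP => d; rewrite in_setI in_set0.
case: (boolP (d \in tset x)) => h //=.
by rewrite inE (tset_sq h) ltxx.
Qed.

Lemma card_InOut : (#|In x| + #|Out x| + 3 = #|I|)%N.
Proof.
rewrite -card_tset -cardsT.
have -> : [set: I] = (In x :|: Out x) :|: tset x.
  apply/setP => d; rewrite in_setT in_setU in_setU.
  case: (boolP (d \in tset x)) => h; first by rewrite orbT.
  by rewrite orbF !inE; have := ntset_sq h; rewrite neq_lt.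
rewrite cardsU cardsU.
have -> : In x :&: Out x = set0.
  by apply/setP => d; rewrite !inE; apply/negP => /andP [h1 h2]; move: (lt_trans h1 h2); rewrite ltxx.
have -> : (In x :|: Out x) :&: tset x = set0.
  apply/setP => d; rewrite in_setI in_setU in_set0; apply/negP => /andP [/orP [] h1 h2];
  by move: h1; rewrite inE (tset_sq h2) ltxx.
by rewrite !cards0 !subn0.
Qed.

Lemma sub_tset (Q : {set I}) : (tset x \subset Q) = inQ Q x.
Proof. by rewrite /tset /inQ !subUset !sub1set andbA. Qed.

Lemma full_sub (Q : {set I}) : fullQ P Q x = (Q :\: tset x \subset In x).
Proof.
apply/forallP/subsetP => [h d|h d].
  rewrite in_setD => /andP [dn dQ]; have := h d; rewrite dQ dn /= => hh; by rewrite inE.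
by apply/implyP => /andP [dQ dn]; have := h d; rewrite in_setD dQ dn inE => /(_ isT).
Qed.

Lemma empty_sub (Q : {set I}) : emptyQ P Q x = (Q :\: tset x \subset Out x).
Proof.
apply/forallP/subsetP => [h d|h d].
  rewrite in_setD => /andP [dn dQ]; have := h d; rewrite dQ dn /= => hh; by rewrite inE.
by apply/implyP => /andP [dQ dn]; have := h d; rewrite in_setD dQ dn inE => /(_ isT).
Qed.

Lemma binIn m : 'C(#|In x|, m) =
  \sum_(Q : {set I} | #|Q| == (m + 3)%N) (inQ Q x && fullQ P Q x : nat).
Proof.
rewrite -cards_draws (card_shift m dis_In) card_tset -sum1_card big_mkcond /=.
rewrite [RHS]big_mkcond; apply: eq_bigr => Q _; rewrite inE sub_tset full_sub.
by case: (inQ Q x); case: (_ \subset _); case: (#|Q| == _).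
Qed.

Lemma binOut m : 'C(#|Out x|, m) =
  \sum_(Q : {set I} | #|Q| == (m + 3)%N) (inQ Q x && emptyQ P Q x : nat).
Proof.
rewrite -cards_draws (card_shift m dis_Out) card_tset -sum1_card big_mkcond /=.
rewrite [RHS]big_mkcond; apply: eq_bigr => Q _; rewrite inE sub_tset empty_sub.
by case: (inQ Q x); case: (_ \subset _); case: (#|Q| == _).
Qed.
End X.

Lemma moment m :
  (\sum_(x | srt P s0 x) ('C(#|In x|, m) + 'C(#|Out x|, m)) = 'C(#|I|, m + 3) * (2 * m + 2))%N.
Proof.
rewrite (eq_bigr (fun x => \sum_(Q : {set I} | #|Q| == (m + 3)%N)
    ((inQ Q x && fullQ P Q x : nat) + (inQ Q x && emptyQ P Q x : nat))%N)); last first.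
  by move=> x hx; rewrite binIn // binOut // big_split.
rewrite exchange_big /=.
rewrite -card_draws -sum1_card big_distrl /=.
apply: eq_big => [Q|Q hQ]; first by rewrite inE.
rewrite mul1n.
have h2 : (2 <= #|Q|)%N by rewrite (eqP hQ) addnC.
have := e0_lemma HPinj Hcol Hcoc Hphi h2.
rewrite (eqP hQ) (_ : (2 * (m + 3) - 4 = 2 * m + 2)%N); last by lia.
move=> <-.
rewrite [RHS]big_mkcond [LHS]big_mkcond; apply: eq_bigr => x _.
by case: (srt P s0 x); case: (inQ Q x); case: (fullQ P Q x); case: (emptyQ P Q x).
Qed.

Definition cnt (j : nat) := #|[set x | srt P s0 x && (#|In x| == j)]|.

Lemma sum_part (N : nat) (g : T3 -> nat) (F : nat -> nat) :
  (forall x, srt P s0 x -> (g x <= N)%N) ->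
  (\sum_(x | srt P s0 x) F (g x) =
   \sum_(j < N.+1) F j * #|[set x | srt P s0 x && (g x == j)]|)%N.
Proof.
move=> hg.
rewrite (eq_bigr (fun x => \sum_(j < N.+1) (g x == j) * F j)%N); last first.
  move=> x hx; have hx' : (g x < N.+1)%N by rewrite ltnS hg.
  rewrite (bigD1 (Ordinal hx')) //= eqxx mul1n big1 ?addn0 // => j hj.
  by rewrite (_ : (g x == j) = false) // eq_sym; apply/negbTE; apply: contra hj => /eqP e;
     apply/eqP; apply: val_inj.
rewrite exchange_big /=; apply: eq_bigr => j _.
rewrite -big_distrl /= mulnC; congr (_ * _)%N.
rewrite -sum1_card [RHS](eq_bigl (fun x => srt P s0 x && (g x == j))) => [|x]; last by rewrite inE.
by rewrite [RHS]big_mkcondr /=; apply: eq_bigr => x _; case: (g x == j).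
Qed.

Lemma ej_formula (N : nat) : #|I| = N.+3 ->
  forall j, (j <= N)%N -> (cnt j + cnt (N - j) = 2 * (j.+1 * (N.+1 - j)))%N.
Proof.
move=> hI; apply: (@mom_inv N (fun j => cnt j + cnt (N - j))%N (fun j => 2 * (j.+1 * (N.+1 - j)))%N).
move=> m.
have bI x : srt P s0 x -> (#|In x| <= N)%N.
  move=> hx; have := card_InOut hx; rewrite hI; lia.
have bO x : srt P s0 x -> #|Out x| = (N - #|In x|)%N.
  move=> hx; have := card_InOut hx; rewrite hI; lia.
have := moment m; rewrite big_split /=.
rewrite (sum_part (fun k => 'C(k, m)) bI).
rewrite (eq_bigr (fun x => 'C(N - #|In x|, m))); last by move=> x hx; rewrite bO.
rewrite (sum_part (fun k => 'C(N - k, m)) bI).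
rewrite [X in (_ + X)%N](reindex_inj rev_ord_inj) /=.
rewrite [X in (_ + X)%N](eq_bigr (fun j : 'I_N.+1 => 'C(j, m) * cnt (N - j))%N); last first.
  move=> j _; rewrite subSS (_ : (N - (N - j) = j)%N) //.
  have := ltn_ord j; lia.
rewrite -big_split /= hI => H.
rewrite (eq_bigr (fun j : 'I_N.+1 => 'C(j, m) * cnt j + 'C(j, m) * cnt (N - j))%N); last first.
  by move=> j _; rewrite mulnDr.
rewrite H (_ : (m + 3 = m.+3)%N); last by lia.
rewrite (_ : (2 * m + 2 = 2 * m.+1)%N); last by lia.
rewrite mulnC -mulnA -binsum big_distrr /=.
by apply: eq_bigr => j _; lia.
Qed.
End M.

Section F.
Variable R : realType.
Variables (n : nat) (P : 'I_n -> (R * R)%type).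
Hypothesis HPinj : injective P.
Hypothesis Hgp : general_position P.

Lemma dist_sq (a p : (R * R)%type) : dist a p = Num.sqrt (sq a p).
Proof. by []. Qed.

Lemma dist_le (a b p : (R * R)%type) : (dist a p <= dist b p) = (sq a p <= sq b p).
Proof. by rewrite !dist_sq ler_sqrt // sq_ge0. Qed.

Lemma Hcol : forall i j l, i != j -> i != l -> j != l -> orient (P i) (P j) (P l) != 0.
Proof.
move=> i j l ij il jl; apply/eqP => o.
have [H _] := Hgp; apply: (H i j l); first by rewrite /= !inE negb_or ij il jl.
have pij : P i != P j by apply: contra ij => /eqP /HPinj ->.
exists ((P j).2 - (P i).2), (- ((P j).1 - (P i).1)), (((P j).2 - (P i).2) * (P i).1 + (- ((P j).1 - (P i).1)) * (P i).2).
split.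
  case: (eqVneq ((P j).2 - (P i).2) 0) => [e2|]; last by left.
  right; rewrite oppr_eq0; apply: contra pij; rewrite subr_eq0 => /eqP e1.
  move/eqP: e2; rewrite subr_eq0 => /eqP e2.
  by rewrite [P i]surjective_pairing [P j]surjective_pairing e1 e2.
split => //; [ring | idtac].
by move: o; rewrite /orient => o; apply/eqP; rewrite -subr_eq0 -oppr_eq0; apply/eqP; rewrite -o; ring.
Qed.

Lemma Hcoc : forall i j l m, i != j -> i != l -> j != l -> m != i -> m != j -> m != l ->
  sq (P m) (center (P i) (P j) (P l)) != sq (P i) (center (P i) (P j) (P l)).
Proof.
move=> i j l m ij il jl mi mj ml; apply/eqP => e.
have o := Hcol ij il jl.
have [_ H] := Hgp; apply: (H i j l m).
  by rewrite /= !inE !negb_or ij il jl !(eq_sym _ m) mi mj ml.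
exists (center (P i) (P j) (P l)), (dist (P i) (center (P i) (P j) (P l))).
by split; rewrite // !dist_sq ?center_eqb ?center_eqc ?e.
Qed.

Lemma ex_s0 : exists s0 : R, injective (phi P s0).
Proof.
pose rho (p : 'I_n * 'I_n) := ((P p.1).2 - (P p.2).2) / ((P p.2).1 - (P p.1).1).
exists (1 + \sum_p `|rho p|) => i j; rewrite /phi => e.
apply: HPinj.
have [e1|ne] := eqVneq ((P j).1 - (P i).1) 0.
  move/eqP: e1; rewrite subr_eq0 => /eqP e1.
  move: e; rewrite e1 => /addIr e2.
  by rewrite [P i]surjective_pairing [P j]surjective_pairing e1 e2.
exfalso.
have hr : 1 + \sum_p `|rho p| = rho (i, j).
  rewrite /rho /=; apply: (mulIf ne); rewrite mulfVK //.
  by move: e; rewrite mulrBr; set s := 1 + _; lra.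
have : `|rho (i, j)| <= \sum_p `|rho p|.
  rewrite (bigD1 (i, j)) //=; apply: ler_wpDr => //.
  by apply: sumr_ge0 => p _.
have := ler_norm (rho (i, j)); rewrite -hr; lra.
Qed.

Variable s0 : R.
Hypothesis Hphi : injective (phi P s0).
Notation ph := (phi P s0).
Notation T3 := ('I_n * ('I_n * 'I_n))%type.

Ltac seteq u v w := let z := fresh "z" in move=> z; case: (z == u); case: (z == v); case: (z == w); done.

Ltac perm3 H u v w :=
  first [ apply: (H u v w); [lra | lra | seteq u v w]
        | apply: (H u w v); [lra | lra | seteq u v w]
        | apply: (H v u w); [lra | lra | seteq u v w]
        | apply: (H v w u); [lra | lra | seteq u v w]
        | apply: (H w u v); [lra | lra | seteq u v w]
        | apply: (H w v u); [lra | lra | seteq u v w]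
        | exfalso; lra ].

Lemma sort3 u v w : u != v -> u != w -> v != w ->
  exists x : T3, srt P s0 x /\ tset x = [set u; v; w].
Proof.
move=> uv uw vw.
have H3 : forall a b c, ph c < ph a -> ph a < ph b ->
   (forall z, ((z == a) || (z == b) || (z == c)) = ((z == u) || (z == v) || (z == w))) ->
   exists x : T3, srt P s0 x /\ tset x = [set u; v; w].
  move=> a b c h1 h2 hz; exists (a, (b, c)); split; first by rewrite /srt /= h1 h2.
  by apply/setP => z; rewrite /tset /= !inE hz.
have pn i j : i != j -> ph i != ph j by move=> h; apply: contra h => /eqP /Hphi ->.
have := pn _ _ uv; have := pn _ _ uw; have := pn _ _ vw.
rewrite !neq_lt => /orP [h1|h1] /orP [h2|h2] /orP [h3|h3]; perm3 H3 u v w.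
Qed.

Lemma srt_bounds (x : T3) : srt P s0 x -> forall z, z \in tset x -> ph x.2.2 <= ph z <= ph x.2.1.
Proof.
rewrite /srt => /andP [h1 h2] z; rewrite /tset !inE => /orP [/orP [] |] /eqP ->; apply/andP; split; lra.
Qed.

Lemma srt_tset_inj (x y : T3) : srt P s0 x -> srt P s0 y -> tset x = tset y -> x = y.
Proof.
move=> hx hy e.
have [n1 n2 n3] := srt_neq hx.
have mx : forall z, z \in tset x -> ph x.2.2 <= ph z <= ph x.2.1 := srt_bounds hx.
have my : forall z, z \in tset y -> ph y.2.2 <= ph z <= ph y.2.1 := srt_bounds hy.
have xi1 : x.1 \in tset x by rewrite /tset !inE eqxx.
have xi2 : x.2.1 \in tset x by rewrite /tset !inE eqxx !orbT.
have xi3 : x.2.2 \in tset x by rewrite /tset !inE eqxx !orbT.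
have yi2 : y.2.1 \in tset y by rewrite /tset !inE eqxx !orbT.
have yi3 : y.2.2 \in tset y by rewrite /tset !inE eqxx !orbT.
have e22 : x.2.2 = y.2.2.
  apply: Hphi; apply/eqP; rewrite eq_le.
  have h1 : x.2.2 \in tset y by rewrite -e.
  have h2 : y.2.2 \in tset x by rewrite e.
  have /andP [a1 _] := my _ h1.
  have /andP [a2 _] := mx _ h2.
  by rewrite a1 a2.
have e21 : x.2.1 = y.2.1.
  apply: Hphi; apply/eqP; rewrite eq_le.
  have h1 : x.2.1 \in tset y by rewrite -e.
  have h2 : y.2.1 \in tset x by rewrite e.
  have /andP [_ a1] := my _ h1.
  have /andP [_ a2] := mx _ h2.
  by rewrite a1 a2.
have e1 : x.1 = y.1.
  move: xi1; rewrite e /tset !inE -e21 -e22 (negbTE n1) (negbTE n2) !orbF.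
  by move/eqP.
by rewrite [x]surjective_pairing [x.2]surjective_pairing [y]surjective_pairing [y.2]surjective_pairing e1 e21 e22.
Qed.

Lemma reg_sq (A : {set 'I_n}) p : region P A p <->
  (forall i j, i \in A -> j \notin A -> sq (P i) p <= sq (P j) p).
Proof.
split => h i j hi hj; first by rewrite -dist_le; exact: h.
by rewrite /halfplane dist_le; exact: h.
Qed.

Definition good k (x : T3) :=
  srt P s0 x && ((#|In P x| + 1 == k)%N || (#|In P x| + 2 == k)%N).

Section XB.
Variable x : T3.
Hypothesis hx : srt P s0 x.

Lemma reg_B (B : {set 'I_n}) : B \subset tset x -> region P (In P x :|: B) (ctr P x).
Proof.
move=> sB; apply/reg_sq => i j; rewrite !in_setU negb_or => hi /andP [hj1 hj2].
have le1 : sq (P i) (ctr P x) <= rad P x.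
  case/orP: hi => [|hi]; first by rewrite inE => /ltW.
  by rewrite (tset_sq Hcol hx) // (subsetP sB).
apply: (le_trans le1); move: hj1; rewrite inE -leNgt //.
Qed.

Lemma card_B (B : {set 'I_n}) : B \subset tset x -> #|In P x :|: B| = (#|In P x| + #|B|)%N.
Proof.
move=> sB; rewrite cardsU.
have -> : In P x :&: B = set0.
  apply/setP => z; rewrite !inE; apply/negP => /andP [h1 h2].
  by move: h1; rewrite (tset_sq Hcol hx) ?ltxx // (subsetP sB).
by rewrite cards0 subn0.
Qed.

Lemma inj_B (B1 B2 : {set 'I_n}) : B1 \subset tset x -> B2 \subset tset x ->
  In P x :|: B1 = In P x :|: B2 -> B1 = B2.
Proof.
move=> s1 s2 e; apply/setP => z.
have nB (B : {set 'I_n}) : B \subset tset x -> z \in In P x -> z \notin B.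
  move=> sB; rewrite inE => h; apply/negP => zB; move: h.
  by rewrite (tset_sq Hcol hx) ?ltxx // (subsetP sB).
have : (z \in In P x :|: B1) = (z \in In P x :|: B2) by rewrite e.
rewrite !in_setU; case: (boolP (z \in In P x)) => //= h.
by rewrite (negbTE (nB _ s1 h)) (negbTE (nB _ s2 h)).
Qed.

End XB.

Lemma good_vertex k x : good k x -> voronoi_vertex P k (ctr P x).
Proof.
move=> /andP [hx hk].
have [n1 n2 n3] := srt_neq hx.
have ta : x.1 \in tset x by rewrite /tset !inE eqxx.
have tb : x.2.1 \in tset x by rewrite /tset !inE eqxx !orbT.
have tc : x.2.2 \in tset x by rewrite /tset !inE eqxx !orbT.
have gen (f : 'I_n -> {set 'I_n}) :
    (forall u, u \in tset x -> f u \subset tset x) ->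
    (forall u v, u \in tset x -> v \in tset x -> f u = f v -> u = v) ->
    (forall u, u \in tset x -> (#|In P x| + #|f u|)%N = k) ->
    voronoi_vertex P k (ctr P x).
  move=> fs finj fc.
  exists (In P x :|: f x.1), (In P x :|: f x.2.1), (In P x :|: f x.2.2).
  split; first by split; rewrite card_B ?fc ?fs.
  split; first split.
  - apply/negP => /eqP /(inj_B hx (fs _ ta) (fs _ tb)) /(finj _ _ ta tb) e.
    by move: n1; rewrite e eqxx.
  - apply/negP => /eqP /(inj_B hx (fs _ ta) (fs _ tc)) /(finj _ _ ta tc) e.
    by move: n2; rewrite e eqxx.
  - apply/negP => /eqP /(inj_B hx (fs _ tb) (fs _ tc)) /(finj _ _ tb tc) e.
    by move: n3; rewrite e eqxx.
  by split; apply: reg_B => //; apply: fs.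
case/orP: hk => /eqP hk.
  apply: (gen (fun u => [set u])).
  - by move=> u hu; rewrite sub1set.
  - by move=> u v _ _ /setP /(_ u); rewrite !inE eqxx => /esym /eqP.
  - by move=> u _; rewrite cards1.
apply: (gen (fun u => tset x :\ u)).
- by move=> u _; apply: subD1set.
- move=> u v hu hv /setP /(_ u); rewrite !in_setD1 eqxx hu /= andbT => /esym.
  by move/negbFE/eqP.
- move=> u hu; have := cardsD1 u (tset x); rewrite hu (card_tset hx).
  by rewrite /= add1n => -[<-]; rewrite -hk.
Qed.

Lemma pair_r (A B : {set 'I_n}) p : region P A p -> region P B p -> A != B -> #|A| = #|B| ->
  exists x0 y0, [/\ x0 \in A, y0 \notin A, sq (P x0) p = sq (P y0) p,
   (forall i, i \in A -> sq (P i) p <= sq (P x0) p) /\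
   (forall j, j \notin A -> sq (P x0) p <= sq (P j) p) &
   (forall i, i \in B -> sq (P i) p <= sq (P x0) p) /\
   (forall j, j \notin B -> sq (P x0) p <= sq (P j) p)].
Proof.
move=> /reg_sq hA /reg_sq hB AB cAB.
have /subsetPn [x0 x0A x0B] : ~~ (A \subset B).
  by apply: contra AB => sAB; rewrite eqEcard sAB cAB leqnn.
have /subsetPn [y0 y0B y0A] : ~~ (B \subset A).
  by apply: contra AB => sBA; rewrite eq_sym eqEcard sBA cAB leqnn.
have e1 := hA _ _ x0A y0A; have e2 := hB _ _ y0B x0B.
have e : sq (P x0) p = sq (P y0) p by apply/eqP; rewrite eq_le e1 e2.
exists x0, y0; split => //; split.
- by move=> i iA; rewrite e; apply: hA.
- by move=> j jA; apply: hA.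
- by move=> i iB; apply: hB.
- by move=> j jB; rewrite e; apply: hB.
Qed.

Lemma card3 (E : {set 'I_n}) : #|E| = 3%N ->
  exists u v w, [/\ u != v, u != w, v != w & E = [set u; v; w]].
Proof.
move=> h; have hu := enum_uniq (pred_of_set E); have hm := mem_enum (pred_of_set E).
have := cardE E; rewrite h.
case: (enum E) hu hm => [|u [|v [|w [|? ?]]]] //= hu hm _.
move: hu; rewrite !inE negb_or andbT => /andP [/andP [uv uw] vw].
exists u, v, w; split => //.
by apply/setP => z; rewrite -hm !inE orbA.
Qed.

Lemma binom_small e s : (e <= 3)%N -> (3 <= 'C(e, s))%N -> e = 3%N /\ (s = 1%N \/ s = 2%N).
Proof.
by case: e => [|[|[|[|e]]]] // _; case: s => [|[|[|[|s]]]] //=; auto.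
Qed.

Lemma Eq_le3 p r : (#|[set i | sq (P i) p == r]| <= 3)%N.
Proof.
rewrite leqNgt; apply/negP => h.
set E := [set i | sq (P i) p == r] in h.
have c1 := cardsD1 _ E.
have /set0Pn [e1 h1] : E != set0 by rewrite -card_gt0; apply: leq_trans h.
have := c1 e1; rewrite h1 => c1'.
have /set0Pn [e2 h2] : E :\ e1 != set0 by rewrite -card_gt0; lia.
have := cardsD1 e2 (E :\ e1); rewrite h2 => c2'.
have /set0Pn [e3 h3] : E :\ e1 :\ e2 != set0 by rewrite -card_gt0; lia.
have := cardsD1 e3 (E :\ e1 :\ e2); rewrite h3 => c3'.
have /set0Pn [e4 h4] : E :\ e1 :\ e2 :\ e3 != set0 by rewrite -card_gt0; lia.
move: h4 h3 h2 h1; rewrite !in_setD1 !inE.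
move=> /and4P [n43 n42 n41 /eqP q4] /and3P [n32 n31 /eqP q3] /andP [n21 /eqP q2] /eqP q1.
have [_ H] := Hgp; apply: (H e1 e2 e3 e4).
  rewrite /= !inE !negb_or !andbT.
  by rewrite !(eq_sym e1) n21 n31 n41 !(eq_sym e2) n32 n42 (eq_sym e3) n43.
exists p, (Num.sqrt r); split; by rewrite dist_sq ?q1 ?q2 ?q3 ?q4.
Qed.

Lemma vertex_good k p : voronoi_vertex P k p -> exists x, good k x /\ ctr P x = p.
Proof.
move=> [A1 [A2 [A3 [[c1 c2 c3] [[d12 d13 d23] [r1 r2 r3]]]]]].
have [x0 [y0 [x0A y0A e0 [S1a S1b] [S2a S2b]]]] := pair_r r1 r2 d12 (etrans c1 (esym c2)).
have [x1 [y1 [x1A y1A e1 [T1a T1b] [S3a S3b]]]] := pair_r r1 r3 d13 (etrans c1 (esym c3)).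
set r := sq (P x0) p in e0 S1a S1b S2a S2b.
have rr : sq (P x1) p = r.
  apply/eqP; rewrite eq_le; apply/andP; split; first exact: S1a.
  exact: T1a.
rewrite rr in S3a S3b.
pose E := [set i | sq (P i) p == r].
pose Inn := [set i | sq (P i) p < r].
have split (A : {set 'I_n}) : (forall i, i \in A -> sq (P i) p <= r) ->
    (forall j, j \notin A -> r <= sq (P j) p) ->
    A = Inn :|: (A :&: E) /\ #|A| = (#|Inn| + #|A :&: E|)%N.
  move=> Sa Sb.
  have eA : A = Inn :|: (A :&: E).
    apply/setP => z; rewrite !inE.
    case: (boolP (z \in A)) => zA /=.
      by rewrite orbC -le_eqVlt; apply/esym; apply: Sa.
    by rewrite orbF; apply/esym/negbTE; rewrite -leNgt; apply: Sb.
  split => //; rewrite [in LHS]eA cardsU.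
  have -> : Inn :&: (A :&: E) = set0.
    apply/setP => z; rewrite !inE; apply/negP => /and3P [h1 _ /eqP h2].
    by move: h1; rewrite h2 ltxx.
  by rewrite cards0 subn0.
have [eA1 cA1] := split _ S1a S1b.
have [eA2 cA2] := split _ S2a S2b.
have [eA3 cA3] := split _ S3a S3b.
pose sz := #|A1 :&: E|.
have cB2 : #|A2 :&: E| = sz by apply/eqP; rewrite -(eqn_add2l #|Inn|) -cA1 -cA2 c1 c2.
have cB3 : #|A3 :&: E| = sz by apply/eqP; rewrite -(eqn_add2l #|Inn|) -cA1 -cA3 c1 c3.
have dB (X Y : {set 'I_n}) : X = Inn :|: (X :&: E) -> Y = Inn :|: (Y :&: E) -> X != Y ->
    X :&: E != Y :&: E.
  by move=> eX eY; apply: contra => /eqP h; rewrite eX eY h.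
have three : (3 <= 'C(#|E|, sz))%N.
  rewrite -cards_draws.
  have -> : 3%N = #|[set A1 :&: E; A2 :&: E; A3 :&: E]|.
    rewrite setUC cardsU1 cards2 !inE negb_or (dB _ _ eA1 eA2 d12).
    by rewrite eq_sym (dB _ _ eA1 eA3 d13) eq_sym (dB _ _ eA2 eA3 d23).
  apply: subset_leq_card; apply/subsetP => B; rewrite !inE => /orP [/orP []|] /eqP ->;
  by rewrite subsetIr /= ?cB2 ?cB3.
have [cE hsz] := binom_small (Eq_le3 p r) three.
have [u [v [w [uv uw vw eE]]]] := card3 cE.
have [x [hx tx]] := sort3 uv uw vw.
have xE z : z \in tset x -> sq (P z) p = r.
  by rewrite tx -eE inE => /eqP.
have ta : x.1 \in tset x by rewrite /tset !inE eqxx.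
have tb : x.2.1 \in tset x by rewrite /tset !inE eqxx !orbT.
have tc : x.2.2 \in tset x by rewrite /tset !inE eqxx !orbT.
have [n1 n2 n3] := srt_neq hx.
have cx : ctr P x = p.
  rewrite /ctr; apply/esym/center_uniq; first exact: Hcol.
    by rewrite !xE.
  by rewrite !xE.
have rx : rad P x = r by rewrite /rad cx xE.
have Ix : In P x = Inn by apply/setP => z; rewrite !inE cx rx.
exists x; split => //; rewrite /good hx Ix /=.
rewrite -c1 cA1 -/sz.
by case: hsz => ->; rewrite eqxx ?orbT.
Qed.

Lemma lt_rad_card x y : srt P s0 x -> srt P s0 y -> ctr P x = ctr P y -> rad P x < rad P y ->
  (#|In P x| + 3 <= #|In P y|)%N.
Proof.
move=> hx hy cxy lt.
rewrite -(card_tset hx) -(card_B hx (subxx _)).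
apply: subset_leq_card; apply/subsetP => z; rewrite in_setU => /orP [|zt]; rewrite !inE -cxy.
  by move=> h; apply: lt_trans lt.
by rewrite (tset_sq Hcol hx zt).
Qed.

Lemma good_inj k x y : good k x -> good k y -> ctr P x = ctr P y -> x = y.
Proof.
move=> /andP [hx kx] /andP [hy ky] cxy.
case: (ltgtP (rad P x) (rad P y)) => [lt|lt|eq].
- have := lt_rad_card hx hy cxy lt; move: kx ky => /orP [] /eqP kx /orP [] /eqP ky; lia.
- have := lt_rad_card hy hx (esym cxy) lt; move: kx ky => /orP [] /eqP kx /orP [] /eqP ky; lia.
apply: srt_tset_inj => //.
apply/eqP; rewrite eq_sym eqEcard (card_tset hx) (card_tset hy) leqnn andbT.
apply/subsetP => z zy; apply: contraT => zx.
have := ntset_sq Hcoc hx zx; rewrite eq cxy (tset_sq Hcol hy zy).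
by rewrite eqxx.
Qed.

Lemma nv k : num_vertices P k #|[set x | good k x]|.
Proof.
exists (map (ctr P) (enum [set x | good k x])); split.
- rewrite map_inj_in_uniq ?enum_uniq // => x y; rewrite !mem_enum !inE.
  exact: good_inj.
- by rewrite size_map -cardE.
move=> p; split.
  by move=> /mapP [x]; rewrite mem_enum inE => gx ->; apply: good_vertex.
move=> /vertex_good [x [gx <-]]; apply: map_f.
by rewrite mem_enum inE.
Qed.

Lemma card_good k : (1 <= k)%N ->
  #|[set x | good k x]| = (cnt P s0 k.-1 + (if (2 <= k)%N then cnt P s0 (k - 2) else 0))%N.
Proof.
move=> hk; rewrite /cnt.
case: (leqP 2 k) => h2.
  have -> : [set x | good k x] =
      [set x | srt P s0 x & #|In P x| == k.-1] :|: [set x | srt P s0 x & #|In P x| == (k - 2)%N].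
    apply/setP => x; rewrite !inE /good.
    case: (srt P s0 x) => //=.
    by apply/idP/idP => /orP [] /eqP e; apply/orP; [left|right|left|right]; apply/eqP; lia.
  rewrite cardsU.
  have -> : [set x | srt P s0 x & #|In P x| == k.-1] :&: [set x | srt P s0 x & #|In P x| == (k - 2)%N] = set0.
    apply/setP => x; rewrite !inE; apply/negP => /andP [/andP [_ /eqP a] /andP [_ /eqP b]].
    by move: a b => ->; lia.
  by rewrite cards0 subn0.
rewrite addn0; apply: eq_card => x; rewrite !inE /good.
case: (srt P s0 x) => //=.
by apply/idP/idP => [/orP [] /eqP e|/eqP e]; apply/eqP; lia.
Qed.
End F.

Local Close Scope ring_scope.
Lemma arith n k a b c d : 2 <= k -> k <= n - 2 -> 3 <= n ->
  b + d = 2 * ((k - 2).+1 * ((n - 3).+1 - (k - 2))) ->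
  a + c = 2 * ((k - 1).+1 * ((n - 3).+1 - (k - 1))) ->
  a + b + (d + c) + 2 * n = 4 * k * (n - k).
Proof.
move=> h1 h2 h3.
have [j ek] : exists j, k = j + 2 by exists (k - 2); lia.
subst k.
have [l en] : exists l, n = j + l + 4 by exists (n - j - 4); lia.
subst n.
have -> : j + 2 - 2 = j by lia.
have -> : (j + l + 4 - 3).+1 - j = l + 2 by lia.
have -> : j + 2 - 1 = j + 1 by lia.
have -> : (j + l + 4 - 3).+1 - (j + 1) = l + 1 by lia.
have -> : j + l + 4 - (j + 2) = l + 2 by lia.
move=> e1 e2.
have -> : a + b + (d + c) = (a + c) + (b + d) by lia.
rewrite e1 e2; ring.
Qed.

Local Open Scope ring_scope.

Lemma cnt_big (R : realType) (n : nat) (P : 'I_n -> (R * R)%type) (s0 : R) (Hcol' : forall i j l, i != j -> i != l -> j != l -> orient (P i) (P j) (P l) != 0)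
  (Hcoc' : forall i j l m, i != j -> i != l -> j != l -> m != i -> m != j -> m != l ->
  sq (P m) (center (P i) (P j) (P l)) != sq (P i) (center (P i) (P j) (P l))) j :
  (n - 3 < j)%N -> cnt P s0 j = 0%N.
Proof.
move=> hj; apply/eqP; rewrite cards_eq0; apply/eqP/setP => x; rewrite !inE.
apply/negP => /andP [hx /eqP e].
have := card_InOut Hcol' Hcoc' hx; rewrite card_ord; lia.
Qed.

Local Close Scope ring_scope.

Theorem mainTheorem4 (R : realType) (n : nat) (P : 'I_n -> (R * R)%type)
  (HPinj : injective P) (Hn : 3 <= n) (Hgp : general_position P)
  (k : nat) (Hk1 : 1 <= k) (Hk2 : k <= n - 1) :
  exists vk vnk : nat,
    [/\ num_vertices P k vk, num_vertices P (n - k) vnk &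
        vk + vnk + 2 * n = 4 * k * (n - k)].
Proof.
have [s0 Hphi] := ex_s0 HPinj.
exists #|[set x | good P s0 k x]|, #|[set x | good P s0 (n - k) x]|.
split; [exact: nv | exact: nv |].
have hI : #|'I_n| = (n - 3).+3 by rewrite card_ord; lia.
have ej := ej_formula HPinj (Hcol HPinj Hgp) (Hcoc HPinj Hgp) Hphi hI.
have hlt : (n - 3 < n - 2)%N by lia.
have z := cnt_big s0 (Hcol HPinj Hgp) (Hcoc HPinj Hgp) hlt.
rewrite !card_good //; last by lia.
have [->|k1] := eqVneq k 1.
  rewrite /= (_ : 1 < n - 1 = true); last by apply/idP; lia.
  rewrite (_ : (n - 1).-1 = n - 2); last by lia.
  rewrite (_ : n - 1 - 2 = n - 3); last by lia.
  have := ej 0 (leq0n _); rewrite subn0 z; lia.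
have [ek|kn] := eqVneq k (n - 1).
  rewrite ek (_ : 1 < n - 1 = true); last by apply/idP; lia.
  rewrite (_ : n - (n - 1) = 1); last by lia.
  rewrite /= (_ : (n - 1).-1 = n - 2); last by lia.
  rewrite (_ : n - 1 - 2 = n - 3); last by lia.
  have := ej 0 (leq0n _); rewrite subn0 z; lia.
rewrite (_ : 1 < k = true); last by apply/idP; lia.
rewrite (_ : 1 < n - k = true); last by apply/idP; lia.
have h1 : k - 1 <= n - 3 by lia.
have h2 : k - 2 <= n - 3 by lia.
have := ej _ h1; have := ej _ h2.
rewrite (_ : n - 3 - (k - 1) = n - k - 2); last by lia.
rewrite (_ : n - 3 - (k - 2) = n - k - 1); last by lia.
rewrite (_ : (n - k).-1 = n - k - 1); last by lia.
rewrite (_ : k.-1 = k - 1); last by lia.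
have hk2 : 2 <= k by lia.
have hkn : k <= n - 2 by lia.
move: (cnt P s0 (k - 1)) (cnt P s0 (k - 2)) (cnt P s0 (n - k - 1)) (cnt P s0 (n - k - 2)) => a b c d.
move=> e2 e1; exact: (@arith n k a b d c).
Qed.
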